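(* Let $\mathds{k}$ be an algebraically closed field, $A$ a finite abelian group, $\omega$ a normalized 3-cocycle on $A$ with values in $\mathds{k}^{\times}$, $B$ a finite abelian group, $f:B\to A$ a homomorphism with kernel $K$, and $\phi:B\times B\to\mathds{k}^\times$ a 2-cochain with $d\phi=f^*\omega^{-1}$. Let $Bil(\phi)(b,k)=\phi(b,k)/\phi(k,b)$ for $b\in B,k\in K$ (a bilinear map $B\times K\to\mathds{k}^\times$), $K^{\bot}:=\{b\in B: Bil(\phi)(b,k)=1\ \forall k\in K\}$ and $(K\cap K^{\bot})^{\bot}:=\{b\in B: Bil(\phi)(b,k)=1\ \forall k\in K\cap K^{\bot}\}$. Then $(K\cap K^{\bot})^{\bot} = K + K^{\bot}$.
   Context: For a 2-cochain $\kappa$, $(d\kappa)(a,b,c)=\kappa(b,c)\kappa(a+b,c)^{-1}\kappa(a,b+c)\kappa(a,b)^{-1}$; $(f^*\omega^{-1})(b,c,d)=\omega(f(b),f(c),f(d))^{-1}$. *)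

(* Defs.v *)
From HB Require Import structures.
From mathcomp Require Import all_boot all_order all_algebra.
Set Implicit Arguments. Unset Strict Implicit. Unset Printing Implicit Defensive.
Import GRing.Theory.
Local Open Scope ring_scope.

(* Cochains with values in k^x are modelled as k-valued functions that are
   pointwise nonzero. A, B are finite abelian groups (finZmodType, written
   additively). *)

Definition cochain3 (k : fieldType) (A : zmodType) (w : A -> A -> A -> k) :=
  forall a b c, w a b c != 0.

Definition cochain2 (k : fieldType) (B : zmodType) (p : B -> B -> k) :=
  forall a b, p a b != 0.

Definition d3 (k : fieldType) (A : zmodType) (w : A -> A -> A -> k)
  (a b c e : A) : k :=
  w b c e * (w (a + b) c e)^-1 * w a (b + c) e * (w a b (c + e))^-1 * w a b c.

Definition normalized_3cocycle (k : fieldType) (A : zmodType)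
  (w : A -> A -> A -> k) :=
  [/\ cochain3 w,
      (forall a b c e, d3 w a b c e = 1) &
      (forall a b c, (a == 0) || (b == 0) || (c == 0) -> w a b c = 1)].

Definition d2 (k : fieldType) (B : zmodType) (p : B -> B -> k) (a b c : B) : k :=
  p b c * (p (a + b) c)^-1 * p a (b + c) * (p a b)^-1.

Definition kerf (A B : finZmodType) (f : B -> A) : {set B} :=
  [set b | f b == 0].

Definition Bil (k : fieldType) (B : zmodType) (p : B -> B -> k) (b x : B) : k :=
  p b x / p x b.

Definition perp (k : fieldType) (B : finZmodType) (p : B -> B -> k)
  (S : {set B}) : {set B} :=
  [set b | [forall x in S, Bil p b x == 1]].

Definition setsum (B : finZmodType) (S T : {set B}) : {set B} :=
  [set x + y | x in S, y in T].

(* Main.v *)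
Require Import Defs.
From HB Require Import structures.
From mathcomp Require Import all_boot all_order all_algebra.
From mathcomp Require Import fingroup.
From mathcomp Require Import ring.
Import GRing.Theory.
Local Open Scope ring_scope.

Section Aux.
Variables (k : fieldType) (B : finZmodType).

Lemma dedekind (G : {group B}) n (chi : 'I_n -> B -> k) (c : 'I_n -> k) :
  (forall i x y, x \in G -> y \in G -> chi i (x + y) = chi i x * chi i y) ->
  (forall i x, x \in G -> chi i x != 0) ->
  (forall i j, i != j -> exists2 x, x \in G & chi i x != chi j x) ->
  (forall x, x \in G -> \sum_i c i * chi i x = 0) -> forall i, c i = 0.
Proof.
elim: n chi c => [|n IH] chi c Hm Hnz Hd Hs i; first by case: i.
have Hw : forall j : 'I_n, c (widen_ord (leqnSn n) j) = 0.
  move=> j.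
  have ne : widen_ord (leqnSn n) j != ord_max.
    by rewrite -(inj_eq val_inj) /= neq_ltn ltn_ord.
  have [y yG ney] := Hd _ _ ne.
  suff H0 : c (widen_ord (leqnSn n) j) *
       (chi (widen_ord (leqnSn n) j) y - chi ord_max y) = 0.
    by move/eqP: H0; rewrite mulf_eq0 subr_eq0 (negbTE ney) orbF => /eqP.
  apply: (IH (fun i => chi (widen_ord (leqnSn n) i))
    (fun i => c (widen_ord (leqnSn n) i) *
       (chi (widen_ord (leqnSn n) i) y - chi ord_max y))).
  - by move=> i1 x1 y1; apply: Hm.
  - by move=> i1 x1; apply: Hnz.
  - move=> i1 j1 nij; apply: Hd.
    by apply: contra nij => /eqP/(congr1 val) /= e; apply/eqP/val_inj.
  - move=> x xG.
    have h1 := Hs _ (groupM yG xG).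
    have h2 := Hs _ xG.
    rewrite big_ord_recr /= in h1; rewrite big_ord_recr /= in h2.
    have e1 : \sum_(i0 < n) c (widen_ord (leqnSn n) i0) *
        chi (widen_ord (leqnSn n) i0) (y + x)
      = chi ord_max y * \sum_(i0 < n) c (widen_ord (leqnSn n) i0) *
        chi (widen_ord (leqnSn n) i0) x.
      have -> : \sum_(i0 < n) c (widen_ord (leqnSn n) i0) *
        chi (widen_ord (leqnSn n) i0) x = - (c ord_max * chi ord_max x).
        by apply/eqP; rewrite -addr_eq0 h2.
      have -> : \sum_(i0 < n) c (widen_ord (leqnSn n) i0) *
        chi (widen_ord (leqnSn n) i0) (y + x) = - (c ord_max * chi ord_max (y + x)).
        by apply/eqP; rewrite -addr_eq0 h1.
      rewrite Hm //; ring.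
    rewrite -[RHS](subrr (\sum_(i0 < n) c (widen_ord (leqnSn n) i0) *
        chi (widen_ord (leqnSn n) i0) (y + x))).
    rewrite {2}e1 mulr_sumr -sumrB; apply: eq_bigr => i1 _.
    rewrite Hm //; ring.
have Hmax : c ord_max = 0.
  have := Hs _ (group1 G); rewrite big_ord_recr /= big1; last first.
    by move=> i1 _; rewrite Hw mul0r.
  rewrite add0r => /eqP; rewrite mulf_eq0 (negbTE (Hnz _ _ (group1 G))) orbF.
  by move/eqP.
have [/eqP->|ne] := boolP (i == ord_max) => //.
have lt : (i < n)%N.
  rewrite ltn_neqAle -ltnS ltn_ord andbT.
  by apply: contra ne => /eqP e; apply/eqP/val_inj.
have -> : i = widen_ord (leqnSn n) (Ordinal lt) by apply: val_inj.
exact: Hw.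
Qed.

Lemma char_bound (G H : {group B}) n (chi : 'I_n -> B -> k) :
  H \subset G ->
  (forall i x y, x \in G -> y \in G -> chi i (x + y) = chi i x * chi i y) ->
  (forall i x, x \in G -> chi i x != 0) ->
  (forall i j, i != j -> exists2 x, x \in G & chi i x != chi j x) ->
  (forall i h, h \in H -> chi i h = 1) ->
  (n <= #|rcosets H G|)%N.
Proof.
move=> sHG Hm Hnz Hd H1.
have x0 : (H :* 1)%g \in rcosets H G by apply/rcosetsP; exists 1%g.
pose M := \matrix_(i < n, j < #|rcosets H G|) chi i (repr (enum_val j)).
have K0 : kermx M = 0.
  apply/row_matrixP => r; rewrite row0.
  set v := row r (kermx M).
  have hv : v *m M = 0 by rewrite -row_mul mulmx_ker row0.
  apply/rowP => i; rewrite [in RHS]mxE.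
  apply: (@dedekind G n chi (fun i => v 0 i) Hm Hnz Hd) => x xG.
  have Cx : (H :* x)%g \in rcosets H G by apply/rcosetsP; exists x.
  move/rowP: hv => /(_ (enum_rank_in x0 (H :* x)%g)).
  rewrite !mxE => hv; rewrite -[X in _ = X]hv; apply: eq_bigr => i1 _; rewrite /M; congr (_ * _); rewrite mxE enum_rankK_in //.
  have [h hH ->] := rcosetP (mem_repr_rcoset H x).
  have hG : h \in G := subsetP sHG h hH.
  by rewrite (Hm _ h x hG xG) (H1 i1 h hH) mul1r.
have := mxrank_ker M; rewrite K0 mxrank0 => /esym/eqP; rewrite subn_eq0 => le.
exact: leq_trans le (rank_leq_col M).
Qed.

End Aux.

Section Bilin.
Variables (k : fieldType) (B : finZmodType) (phi : B -> B -> k) (K : {set B}).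
Hypothesis phinz : forall a b, phi a b != 0.
Local Ltac nz := repeat (apply/andP; split); apply: phinz.
Hypothesis E : forall a b c, (a \in K) || (b \in K) || (c \in K) ->
  phi b c * phi a (b + c) = phi (a + b) c * phi a b.

Lemma perpP b (S : {set B}) :
  reflect (forall x, x \in S -> Bil phi b x = 1) (b \in perp phi S).
Proof.
rewrite inE; apply: (iffP forall_inP) => H x xS; first by apply/eqP; apply: H.
by apply/eqP; apply: H.
Qed.

Lemma Bil_nz b x : Bil phi b x != 0.
Proof. by rewrite /Bil mulf_neq0 ?invr_eq0. Qed.

Lemma Bil_skew x y : Bil phi x y * Bil phi y x = 1.
Proof. by rewrite /Bil; field; nz. Qed.

Lemma BilM1 a b x : x \in K -> Bil phi (a + b) x = Bil phi a x * Bil phi b x.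
Proof.
move=> xK.
have e1 := E a b x; have e2 := E x a b; have e3 := E a x b.
rewrite xK !orbT in e1; rewrite xK /= in e2; rewrite xK !orbT in e3.
have e1' := e1 is_true_true; have e2' := e2 is_true_true; have e3' := e3 is_true_true.
have hP : phi (a + b) x = phi b x * phi a (x + b) / phi a b.
  by rewrite (addrC x b) e1'; field; nz.
have hQ : phi x (a + b) = phi (x + a) b * phi x a / phi a b.
  by rewrite -e2'; field; nz.
have hR : phi a (x + b) = phi (a + x) b * phi a x / phi x b.
  by rewrite -e3'; field; nz.
rewrite /Bil hP hQ hR (addrC a x); field; nz.
Qed.

Lemma BilM2 b x y : x \in K -> y \in K ->
  Bil phi b (x + y) = Bil phi b x * Bil phi b y.
Proof.
move=> xK yK.
have e1 := E b x y; have e2 := E x y b; have e3 := E x b y.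
rewrite yK !orbT in e1; rewrite xK /= in e2; rewrite xK /= in e3.
have e1' := e1 is_true_true; have e2' := e2 is_true_true; have e3' := e3 is_true_true.
have hP : phi b (x + y) = phi (b + x) y * phi b x / phi x y.
  by rewrite -e1'; field; nz.
have hQ : phi (x + y) b = phi y b * phi x (y + b) / phi x y.
  by rewrite e2'; field; nz.
have hR : phi x (y + b) = phi (b + x) y * phi x b / phi b y.
  by rewrite (addrC b x) -e3' (addrC b y); field; nz.
rewrite /Bil hP hQ hR; field; nz.
Qed.

End Bilin.
Arguments perpP {k B phi b S}.
Arguments Bil_nz {k B phi} phinz b x.
Arguments Bil_skew {k B phi} phinz x y.
Arguments BilM1 {k B phi K} phinz E a b x.
Arguments BilM2 {k B phi K} phinz E b x y.

Theorem lemma2p1p2 (k : closedFieldType) (A : finZmodType)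
  (w : A -> A -> A -> k) (B : finZmodType) (f : {additive B -> A})
  (phi : B -> B -> k) :
  normalized_3cocycle w ->
  cochain2 phi ->
  (forall a b c : B, d2 phi a b c = (w (f a) (f b) (f c))^-1) ->
  let K := kerf f in
  perp phi (K :&: perp phi K) = setsum K (perp phi K).
Proof.
move=> [wnz _ wn] phinz Hd K.
have Ew : forall a b c, (a \in K) || (b \in K) || (c \in K) ->
    phi b c * phi a (b + c) = phi (a + b) c * phi a b.
  move=> a b c abc.
  have := Hd a b c; rewrite wn; last by rewrite !inE in abc.
  rewrite invr1 /d2 => h.
  have -> : phi b c * phi a (b + c) =
    (phi b c * (phi (a + b) c)^-1 * phi a (b + c) * (phi a b)^-1) *
    (phi (a + b) c * phi a b).
    by field; rewrite !phinz.
  by rewrite h mul1r.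
have Kgs : group_set K.
  apply/group_setP; split; first by rewrite inE raddf0.
  by move=> x y; rewrite !inE FinRing.zmodMgE raddfD => /eqP-> /eqP->; rewrite addr0.
have Pgs : group_set (perp phi K).
  apply/group_setP; split.
    apply/perpP => x xK; have := BilM1 phinz Ew 0 0 x xK; rewrite addr0 => h.
    by apply/(mulfI (Bil_nz phinz 0 x)); rewrite mulr1 -h.
  move=> x y /perpP xP /perpP yP; apply/perpP => z zK.
  by rewrite FinRing.zmodMgE (BilM1 phinz Ew _ _ _ zK) xP ?yP // mulr1.
pose KG := Group Kgs; pose PG := Group Pgs.
pose L := (KG :&: PG)%G.
have sep : forall r s, (forall x, x \in K -> Bil phi r x = Bil phi s x) ->
    r - s \in perp phi K.
  move=> r s h; apply/perpP => x xK.
  have := BilM1 phinz Ew (r - s) s x xK; rewrite subrK (h x xK) => h2.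
  by apply/(mulIf (Bil_nz phinz s x)); rewrite mul1r -h2.
have sepP : forall r s, ~~ (r - s \in perp phi K) ->
    exists2 x, x \in K & Bil phi r x != Bil phi s x.
  move=> r s nrs.
  case: (boolP [exists x in K, Bil phi r x != Bil phi s x]) =>
     [/exists_inP[x xK h]|/exists_inP nex]; first by exists x.
  exfalso; move/negP: nrs; apply; apply: sep => x xK.
  by apply/eqP; apply/negPn/negP => ne; apply: nex; exists x.
have rK : forall j : 'I_#|rcosets L KG|, repr (enum_val j) \in K.
  move=> j; have /rcosetsP [x xK ->] := enum_valP j.
  have [l /setIP [lK _] ->] := rcosetP (mem_repr_rcoset L x).
  exact: (groupM lK xK).
have rE : forall j : 'I_#|rcosets L KG|, enum_val j = (L :* repr (enum_val j))%g.
  move=> j; have /rcosetsP [x xK ->] := enum_valP j.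
  by apply/esym/rcoset_eqP; apply: mem_repr_rcoset.
apply/setP => y; apply/idP/idP.
  move=> yL.
  case: (boolP [exists x in K, y - x \in perp phi K]) =>
     [/exists_inP [x xK hx] | nex].
    by apply/imset2P; apply: (Imset2spec xK hx); rewrite addrC subrK.
  exfalso.
  pose chi := fun (i : 'I_#|rcosets L KG|.+1) (x : B) =>
    if unlift ord_max i is Some j then Bil phi (repr (enum_val j)) x
    else Bil phi y x.
  have HH := @char_bound k B KG L _ chi; rewrite ltnn in HH; suff : false by []; apply: HH.
  - exact: subsetIl.
  - by move=> i x z xK zK; rewrite /chi; case: unlift => [j|];
      apply: (BilM2 phinz Ew).
  - by move=> i x _; rewrite /chi; case: unlift => [j|]; apply: Bil_nz.
  - move=> i j.
    case: (unliftP ord_max i) => [i' ->|->];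
    case: (unliftP ord_max j) => [j' ->|->];
    rewrite /chi ?liftK ?unlift_none => nij.
    + apply: sepP; apply/negP => hin.
      have nij' : i' != j' by apply: contra nij => /eqP->.
      move/negP: nij'; apply; apply/eqP/enum_val_inj.
      rewrite (rE i') (rE j'); apply/rcoset_eqP/rcosetP.
      exists (repr (enum_val i') - repr (enum_val j')).
        by apply/setIP; split => //; apply: groupM; rewrite ?groupV.
      by rewrite FinRing.zmodMgE subrK.
    + have [x xK h] : exists2 x, x \in K & Bil phi y x != Bil phi (repr (enum_val i')) x.
        apply: sepP; apply/negP => hin; move/exists_inP: nex; apply.
        by exists (repr (enum_val i')).
      by exists x; rewrite // eq_sym.
    + apply: sepP; apply/negP => hin; move/exists_inP: nex; apply.
      by exists (repr (enum_val j')).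
    + by rewrite eqxx in nij.
  - move=> i h /setIP [hK hP]; rewrite /chi; case: unlift => [j|].
      have := Bil_skew phinz (repr (enum_val j)) h.
      by move/perpP: hP => hP; rewrite (hP _ (rK j)) mulr1.
    by move/perpP: yL; apply; apply/setIP.
move/imset2P => [x z xK zP ->].
apply/perpP => l /setIP [lK lP].
move/perpP: zP => zP; move/perpP: lP => lP.
rewrite (BilM1 phinz Ew _ _ _ lK) (zP _ lK) mulr1.
have := Bil_skew phinz x l.
by rewrite (lP _ xK) mulr1.
Qed.
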